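(* Let $A,B\in\mathrm{GL}(\mathcal S)$ satisfy $A|_{\Delta_0}=B|_{\Delta_0}$. Then $A=B$.
   Context: Work over an algebraically closed field of characteristic $\neq2$. $F(X)=\sum_{i=0}^6f_iX^i$, $f_6\neq0$, distinct roots $\theta_1,\dots,\theta_6$. $P_j(X)=\prod_{i\ne j}(X-\theta_i)$, $\omega_j=P_j(\theta_j)$. Points of $\mathbb P^5$ are identified with $P(X)=\sum_{j=0}^5p_jX^j$; $\pi_j=P(\theta_j)/\omega_j$. $\mathcal S\subset\mathbb P^5$ is the smooth surface defined by $\sum_j\theta_j^i\omega_j\pi_j^2=0$, $i=0,1,2$. $\varepsilon^{(i)}$ is the involution $\pi_j\mapsto(-1)^{\delta_{ij}}\pi_j$; $\mathrm{Inv}(\mathcal S)$ is the group of order 32 generated by them. $\Delta_0=\{(p_0:p_1:0:0:0:0)\}$, $\Delta_i=\varepsilon^{(i)}(\Delta_0)$, $\Delta_{ij}=\varepsilon^{(i)}\varepsilon^{(j)}(\Delta_0)$, $\Delta_{ijk}=\varepsilon^{(i)}\varepsilon^{(j)}\varepsilon^{(k)}(\Delta_0)$; these are 32 lines and it is known that they are all the lines on $\mathcal S$. $\mathrm{GL}(\mathcal S)$ denotes the group of automorphisms of $\mathcal S$ which are restrictions of projective linear transformations of $\mathbb P^5$. *)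

(* Defs.v *)
From HB Require Import structures.
From mathcomp Require Import all_boot all_order all_algebra all_field.
Set Implicit Arguments. Unset Strict Implicit. Unset Printing Implicit Defensive.
Import GRing.Theory.
Local Open Scope ring_scope.

Section Defs.
Variable K : closedFieldType.

(* theta : the six distinct roots theta_1..theta_6 of F (indexed 'I_6) *)
Definition omega (theta : 'I_6 -> K) (j : 'I_6) : K :=
  \prod_(i < 6 | i != j) (theta j - theta i).

(* a point of P^5 is represented by a row vector p = (p_0,...,p_5),
   identified with P(X) = sum_j p_j X^j *)
Definition Peval (p : 'rV[K]_6) (x : K) : K := \sum_(j < 6) p 0 j * x ^+ j.

Definition piS (theta : 'I_6 -> K) (p : 'rV[K]_6) (j : 'I_6) : K :=
  Peval p (theta j) / omega theta j.

Definition onS (theta : 'I_6 -> K) (p : 'rV[K]_6) : Prop :=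
  p != 0 /\ forall i : 'I_3,
    \sum_(j < 6) theta j ^+ i * omega theta j * piS theta p j ^+ 2 = 0.

Definition onDelta0 (p : 'rV[K]_6) : Prop :=
  p != 0 /\ forall j : 'I_6, (2 <= j)%N -> p 0 j = 0.

Definition projeq (p q : 'rV[K]_6) : Prop :=
  exists c : K, c != 0 /\ q = c *: p.

(* M induces (by p |-> p M) a projective linear transformation of P^5
   whose restriction is an automorphism of S, i.e. M(S) = S *)
Definition inGLS (theta : 'I_6 -> K) (M : 'M[K]_6) : Prop :=
  M \in unitmx /\ forall p : 'rV[K]_6, onS theta p <-> onS theta (p *m M).
End Defs.

(* Main.v *)
Require Import Defs.
From HB Require Import structures.
From mathcomp Require Import all_boot all_order all_algebra all_field.
Import GRing.Theory.
Local Open Scope ring_scope.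

Lemma omega_neq0 (K : closedFieldType) (theta : 'I_6 -> K) (hd : injective theta) j :
  omega theta j != 0.
Proof.
rewrite /omega; apply/prodf_neq0 => i hij; rewrite subr_eq0.
by apply/eqP => /hd h; move: hij; rewrite h eqxx.
Qed.

Arguments omega_neq0 {K theta}.

Lemma lagr (K : closedFieldType) (theta : 'I_6 -> K) (hd : injective theta) (k : nat)
  (hk : (k < 5)%N) : \sum_j theta j ^+ k / omega theta j = 0.
Proof.
pose l j := \prod_(i < 6 | i != j) ('X - (theta i)%:P).
have hl j m : (l j).[theta m] = if m == j then omega theta j else 0.
  rewrite /l horner_prod; under eq_bigr do rewrite hornerXsubC.
  case: eqP => [->|hmj]; first by [].
  by rewrite (bigD1 m) /=; [rewrite subrr mul0r | apply/eqP].
have sl j : size (l j) = 6%N.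
  rewrite /l -big_filter size_prod_XsubC size_filter.
  transitivity (#|predC1 j|).+1; last by rewrite cardC1 card_ord.
  by rewrite cardE /enum_mem size_filter.
pose L := \sum_j (theta j ^+ k / omega theta j) *: l j.
have hL m : L.[theta m] = theta m ^+ k.
  rewrite /L horner_sum (bigD1 m) //= big1 => [|j hj]; last first.
    by rewrite hornerZ hl eq_sym (negbTE hj) mulr0.
  by rewrite addr0 hornerZ hl eqxx divfK // omega_neq0.
have LX : L - 'X^k = 0.
  apply/eqP; apply/negPn/negP => hne.
  have := max_poly_roots hne (rs := map theta (enum 'I_6)).
  rewrite size_map size_enum_ord map_inj_uniq ?enum_uniq //.
  have -> : all (root (L - 'X^k)) [seq theta i | i <- enum 'I_6].
    by apply/allP => x /mapP [i _ ->]; rewrite /root hornerD hornerN hornerXn hL subrr.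
  move=> /(_ isT isT); apply/negP; rewrite -leqNgt.
  apply: (leq_trans (size_add _ _)); rewrite geq_max size_opp size_polyXn (leq_ltn_trans _ (ltnSn 5)) ?andbT //.
  apply: (leq_trans (size_sum _ _ _)); apply/bigmax_leqP => j _.
  by apply: (leq_trans (size_scale_leq _ _)); rewrite sl.
  by apply: ltnW.
move/eqP: LX; rewrite subr_eq0 => /eqP hLX.
have := congr1 (fun p : {poly K} => p`_5) hLX => /=.
rewrite coefXn /L coef_sum.
have c5 j : (l j)`_5 = 1.
  have := monic_prod_XsubC (index_enum 'I_6) (fun i => i != j) theta.
  by move/monicP; rewrite lead_coefE sl.
rewrite (eq_bigr (fun j => theta j ^+ k / omega theta j)) => [->|j _]; last by rewrite coefZ c5 mulr1.
by clear L hL hLX; case: k hk => [|[|[|[|[|]]]]].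
Qed.

Definition Qf (K : fieldType) (d : 'I_6 -> K) (w : 'rV[K]_6) := \sum_j d j * w 0 j ^+ 2.
Definition bf (K : fieldType) (d : 'I_6 -> K) (v w : 'rV[K]_6) := \sum_j d j * v 0 j * w 0 j.
Arguments Qf {K}. Arguments bf {K}.

Lemma bfC (K : fieldType) d (v w : 'rV[K]_6) : bf d v w = bf d w v.
Proof. by apply: eq_bigr => j _; rewrite mulrAC. Qed.

Lemma bfDr (K : fieldType) d (v w1 w2 : 'rV[K]_6) : bf d v (w1 + w2) = bf d v w1 + bf d v w2.
Proof. by rewrite /bf -big_split; apply: eq_bigr => j _; rewrite mxE mulrDr. Qed.

Lemma bfZr (K : fieldType) d c (v w : 'rV[K]_6) : bf d v (c *: w) = c * bf d v w.
Proof. by rewrite /bf mulr_sumr; apply: eq_bigr => j _; rewrite mxE mulrCA. Qed.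

Lemma bfZl (K : fieldType) d c (v w : 'rV[K]_6) : bf d (c *: v) w = c * bf d v w.
Proof. by rewrite bfC bfZr bfC. Qed.

Lemma bfNr (K : fieldType) d (v w : 'rV[K]_6) : bf d v (- w) = - bf d v w.
Proof. by rewrite -scaleN1r bfZr mulN1r. Qed.

Lemma bf_suml (K : fieldType) d (f : 'I_6 -> 'rV[K]_6) w :
  bf d (\sum_i f i) w = \sum_i bf d (f i) w.
Proof.
rewrite /bf exchange_big; apply: eq_bigr => j _.
by rewrite summxE mulr_sumr mulr_suml; apply: eq_bigr => i _.
Qed.

Lemma Qpol (K : fieldType) d (x y : 'rV[K]_6) : (2%:R : K) != 0 ->
  Qf d (y + x) = 0 -> Qf d (y - x) = 0 -> bf d y x = 0.
Proof.
move=> h2 h1 h3.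
have : Qf d (y + x) - Qf d (y - x) = bf d y x *+ 4.
  rewrite /Qf /bf -sumrB -sumrMnl; apply: eq_bigr => j _.
  by rewrite -mulrBr !mxE subr_sqrDB mulrnAr mulrA.
rewrite h1 h3 subrr => /esym /eqP.
rewrite -mulr_natr mulf_eq0 => /orP [/eqP //|].
have -> : (4%:R : K) = 2%:R * 2%:R by rewrite -natrM.
by rewrite mulf_eq0 (negbTE h2).
Qed.

Definition Vm (K : closedFieldType) (theta : 'I_6 -> K) : 'M[K]_6 :=
  \matrix_(i, j) (theta j ^+ i / omega theta j).
Arguments Vm {K}.

Lemma piV (K : closedFieldType) (theta : 'I_6 -> K) p j :
  (p *m Vm theta) 0 j = piS theta p j.
Proof.
rewrite mxE /piS /Peval mulr_suml; apply: eq_bigr => i _.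
by rewrite mxE mulrA.
Qed.

Lemma Vunit (K : closedFieldType) (theta : 'I_6 -> K) (hd : injective theta) :
  Vm theta \in unitmx.
Proof.
rewrite unitmxE unitfE; apply/negP => /det0P [v hv hvV].
pose P : {poly K} := \poly_(i < 6) v 0 (inord i).
have hP m : P.[theta m] = 0.
  have := congr1 (fun M : 'rV_6 => M 0 m) hvV; rewrite /= piV mxE /piS.
  move/eqP; rewrite mulf_eq0 invr_eq0 (negbTE (omega_neq0 hd m)) orbF => /eqP <-.
  by rewrite /P horner_poly; apply: eq_bigr => i _; rewrite inord_val.
have P0 : P = 0.
  apply/eqP; apply/negPn/negP => hne.
  have := max_poly_roots hne (rs := map theta (enum 'I_6)).
  rewrite size_map size_enum_ord map_inj_uniq ?enum_uniq //.
  have -> : all (root P) [seq theta i | i <- enum 'I_6].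
    by apply/allP => x /mapP [i _ ->]; rewrite /root hP.
  move=> /(_ isT isT); apply/negP; rewrite -leqNgt.
  exact: size_poly.
move/negP: hv; apply; apply/eqP/rowP => j.
have := congr1 (fun p : {poly K} => p`_j) P0; rewrite /= coef_poly ltn_ord coef0 inord_val => ->.
by rewrite mxE.
Qed.

Definition dk (K : closedFieldType) (theta : 'I_6 -> K) (k : nat) (j : 'I_6) :=
  theta j ^+ k * omega theta j.
Arguments dk {K}.

Lemma onSE (K : closedFieldType) (theta : 'I_6 -> K) p :
  onS theta p <-> p != 0 /\ forall i : 'I_3, Qf (dk theta i) (p *m Vm theta) = 0.
Proof.
have e i : Qf (dk theta i) (p *m Vm theta) =
   \sum_(j < 6) theta j ^+ i * omega theta j * piS theta p j ^+ 2.
  by apply: eq_bigr => j _; rewrite piV.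
by split => [[h1 h2]|[h1 h2]]; split => // i; rewrite ?e // -e.
Qed.

Lemma Qsq (K : closedFieldType) (theta : 'I_6 -> K) (hd : injective theta) (k : nat)
  (hk : (k < 3)%N) (w : 'rV[K]_6) :
  (forall j, w 0 j ^+ 2 = (omega theta j)^-1 ^+ 2) -> Qf (dk theta k) w = 0.
Proof.
move=> h; rewrite /Qf -[RHS](@lagr K theta hd k (@ltn_trans 3 k 5 hk isT)).
apply: eq_bigr => j _; rewrite h /dk expr2 mulrA -(mulrA (theta j ^+ k)).
by rewrite mulfV ?omega_neq0 // mulr1.
Qed.

Lemma span0 (K : closedFieldType) (theta : 'I_6 -> K) (hd : injective theta)
  (H : 'M[K]_6) (hH : H \in unitmx) (w : 'rV[K]_6) :
  (forall d, bf (dk theta 0) (row d H) w = 0) -> w = 0.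
Proof.
move=> h.
have hv v : bf (dk theta 0) v w = 0.
  rewrite -(mulmxKV hH v) mulmx_sum_row bf_suml big1 // => i _.
  by rewrite bfZl h mulr0.
apply/rowP => j; have := hv (delta_mx 0 j).
rewrite /bf (bigD1 j) //= big1 => [|i hij]; last by rewrite mxE (negbTE hij) andbF mulr0 mul0r.
rewrite addr0 mxE !eqxx mulr1 /dk expr0 mul1r mxE => /eqP.
by rewrite mulf_eq0 (negbTE (omega_neq0 hd j)) => /eqP.
Qed.

Arguments Qpol {K d x y}. Arguments Vunit {K theta}. Arguments Qsq {K theta}. Arguments span0 {K theta}. Arguments onSE {K theta}. Arguments piV {K theta}.

Theorem mainTheorem8 (K : closedFieldType) (f6 : K) (theta : 'I_6 -> K)
  (hchar : (2%:R : K) != 0) (hf6 : f6 != 0) (hdist : injective theta)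
  (A B : 'M[K]_6) (hA : inGLS theta A) (hB : inGLS theta B)
  (hres : forall p : 'rV[K]_6, onDelta0 p -> projeq (p *m A) (p *m B)) :
  forall p : 'rV[K]_6, onS theta p -> projeq (p *m A) (p *m B).
Proof.
move=> p _.
have hd := hdist.
set V := Vm theta; have hV : V \in unitmx := Vunit hd.
have hAu := hA.1; have hBu := hB.1.
set G := B *m invmx A.
have hGS x : onS theta x -> onS theta (x *m G).
  move=> /(hB.2 x).1 hx; apply/(hA.2 _).2.
  by rewrite /G mulmxA mulmxKV.
set H := invmx V *m G *m V.
have hGV x : x *m G *m V = x *m V *m H.
  by rewrite /H !mulmxA mulmxK.
have hH : H \in unitmx.
  have hGu : G \in unitmx by rewrite unitmx_mul unitmx_inv hAu hBu.
  have h1 : invmx V *m G \in unitmx by rewrite unitmx_mul unitmx_inv hV hGu.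
  by rewrite unitmx_mul h1 hV.
clearbody H.
have QH w : w != 0 -> (forall k : 'I_3, Qf (dk theta k) w = 0) ->
    forall k : 'I_3, Qf (dk theta k) (w *m H) = 0.
  move=> hw hQ.
  have : onS theta (w *m invmx V).
    apply/onSE; split; last by rewrite mulmxKV.
    by apply: contra hw => /eqP h; rewrite -(mulmxKV hV w) h mul0mx.
  by move=> /hGS /onSE [_ h] k; have := h k; rewrite hGV mulmxKV.
have orth (k : nat) a b : (k < 3)%N -> a != b ->
    bf (dk theta k) (row a H) (row b H) = 0.
  move=> hk hab.
  pose om j := (omega theta j)^-1.
  have om0 j : om j != 0 by rewrite invr_eq0 omega_neq0.
  pose va : 'rV[K]_6 := \row_j (if j == a then om j else 0).
  pose vb : 'rV[K]_6 := \row_j (if j == b then om j else 0).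
  pose yb : 'rV[K]_6 := \row_j (if (j == a) || (j == b) then 0 else om j).
  have Qz (s t : bool) : forall k' : 'I_3,
      Qf (dk theta k') ((yb + (-1)^+s *: vb + (-1)^+t *: va) *m H) = 0.
    apply: QH.
      apply/negP => /eqP /rowP /(_ a); rewrite !mxE eqxx (negbTE hab) /= mulr0 !add0r.
      by move=> /eqP; rewrite mulf_eq0 signr_eq0 (negbTE (om0 a)).
    move=> k'; apply: (Qsq hd) => // j; rewrite !mxE.
    case: (eqVneq j a) => [->|hja]; first by rewrite (negbTE hab) /= mulr0 !add0r exprMn sqrr_sign mul1r.
    case: (eqVneq j b) => [->|hjb] /=; first by rewrite mulr0 addr0 add0r exprMn sqrr_sign mul1r.
    by rewrite !mulr0 !addr0.
  have hva : va *m H = om a *: row a H.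
    rewrite rowE scalemxAl; congr (_ *m _); apply/rowP => j; rewrite !mxE.
    by case: (eqVneq j a) => [->|hja]; rewrite ?mulr1 ?mulr0.
  have hvb : vb *m H = om b *: row b H.
    rewrite rowE scalemxAl; congr (_ *m _); apply/rowP => j; rewrite !mxE.
    by case: (eqVneq j b) => [->|hjb]; rewrite ?mulr1 ?mulr0.
  have e (s : bool) : bf (dk theta k) (yb *m H) (va *m H) +
       (-1)^+s * bf (dk theta k) (vb *m H) (va *m H) = 0.
    have h1 := Qz s false (Ordinal hk); have h2 := Qz s true (Ordinal hk).
    rewrite /= expr0 scale1r mulmxDl in h1.
    rewrite /= expr1 scaleN1r mulmxDl mulNmx in h2.
    have := Qpol hchar h1 h2.
    by rewrite mulmxDl -scalemxAl bfC bfDr bfZr [bf _ (va *m H) _]bfC [bf _ (va *m H) _]bfC.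
  have e1 := e false; have e2 := e true.
  rewrite expr0 mul1r in e1; rewrite expr1 mulN1r in e2.
  have : bf (dk theta k) (vb *m H) (va *m H) * 2%:R = 0.
    set x := bf _ (yb *m H) _ in e1 e2; set y := bf _ (vb *m H) _ in e1 e2 *.
    have hh : (x + y) - (x + - y) = y *+ 2 by rewrite [x + y]addrC addrKA opprK mulr2n.
    by rewrite e1 e2 subrr in hh; rewrite mulr_natr -hh.
  move/eqP; rewrite mulf_eq0 (negbTE hchar) orbF hva hvb bfZl bfZr !mulf_eq0 !(negbTE (om0 _)) /= bfC.
  by move/eqP.
have nz0 b : bf (dk theta 0) (row b H) (row b H) != 0.
  apply/negP => /eqP h0.
  have : row b H = 0.
    apply: (span0 hd H hH) => d; case: (eqVneq d b) => [->//|hdb].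
    exact: (orth 0%N d b isT hdb).
  rewrite rowE => /(congr1 (fun M => M *m invmx H)); rewrite mulmxK // mul0mx.
  by move=> /rowP /(_ b); rewrite !mxE !eqxx /= => /eqP; rewrite oner_eq0.
have rowuniq a j j' : H a j != 0 -> H a j' != 0 -> j = j'.
  move=> h1 h2.
  pose ra := row a H.
  pose lam := bf (dk theta 1) ra ra / bf (dk theta 0) ra ra.
  pose w : 'rV[K]_6 := \row_i (theta i * H a i) - lam *: ra.
  have w0 : w = 0.
    apply: (span0 hd H hH w) => d.
    rewrite /w bfDr bfNr bfZr.
    have -> : bf (dk theta 0) (row d H) (\row_i (theta i * H a i)) = bf (dk theta 1) (row d H) ra.
      apply: eq_bigr => i _; rewrite /dk !mxE expr0 expr1 mul1r.
      by rewrite mulrA [_ * theta i]mulrC !mulrA.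
    case: (eqVneq d a) => [->|hda].
      by rewrite /lam divfK ?nz0 // subrr.
    by rewrite (orth 1%N d a isT hda) (orth 0%N d a isT hda) mulr0 subrr.
  have hj i : H a i != 0 -> theta i = lam.
    move=> hi; have := congr1 (fun M : 'rV_6 => M 0 i) w0; rewrite /w !mxE /= => /eqP.
    by rewrite subr_eq0 => /eqP; apply: mulIf.
  by apply: hd; rewrite (hj _ h1) (hj _ h2).
have coluniq a b j : H a j != 0 -> H b j != 0 -> a = b.
  move=> h1 h2; apply/eqP/negPn/negP => hab.
  have := orth 0%N a b isT hab.
  rewrite /bf (bigD1 j) //= big1 => [|i hij].
    rewrite addr0 !mxE /dk expr0 mul1r => /eqP.
    by rewrite !mulf_eq0 (negbTE (omega_neq0 hd j)) (negbTE h1) (negbTE h2).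
  have -> : row a H 0 i = 0.
    rewrite mxE; apply/eqP/negPn/negP => hi; move: hij.
    by rewrite (rowuniq a i j hi h1) eqxx.
  by rewrite mulr0 mul0r.
have hD q : onDelta0 q -> exists c, c != 0 /\ q *m V *m H = c *: (q *m V).
  move=> /hres [c [hc hq]]; exists c; split => //.
  by rewrite -hGV /G mulmxA hq -!scalemxAl mulmxK.
have diag a j : a != j -> H a j = 0.
  move=> haj; apply/eqP/negPn/negP => h1.
  pose q : 'rV[K]_6 := \row_i (if (i : nat) == 0%N then - theta j
                                else if (i : nat) == 1%N then 1 else 0).
  have hq : onDelta0 q.
    split.
      apply/negP => /eqP /rowP /(_ (@Ordinal 6 1 isT)); rewrite !mxE /=.
      by move=> /eqP; rewrite oner_eq0.
    by move=> [[|[|i]] hi] //= _; rewrite mxE.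
  have hqV m : (q *m V) 0 m = (theta m - theta j) / omega theta m.
    rewrite piV /piS /Peval; congr (_ / _).
    rewrite !big_ord_recl big_ord0 !mxE /=.
    by rewrite expr0 mulr1 expr1 mul1r !mul0r !addr0 addrC.
  have [c [hc hcq]] := hD q hq.
  have := congr1 (fun M : 'rV_6 => M 0 j) hcq; rewrite /= [LHS]mxE [RHS]mxE hqV subrr mul0r mulr0.
  rewrite (bigD1 a) //= big1 => [|b hba]; last first.
    have -> : H b j = 0.
      by apply/eqP/negPn/negP => hb; move: hba; rewrite (coluniq b a j hb h1) eqxx.
    by rewrite mulr0.
  rewrite addr0 hqV => /eqP; rewrite !mulf_eq0 (negbTE h1) orbF invr_eq0 (negbTE (omega_neq0 hd a)) orbF.
  by rewrite subr_eq0 => /eqP /hd hja; move: haj; rewrite hja eqxx.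
have [c0 [hc0 hscal]] : exists c, c != 0 /\ forall x : 'rV[K]_6, x *m G = c *: x.
  pose q0 : 'rV[K]_6 := \row_i (if (i : nat) == 0%N then 1 else 0).
  have hq0 : onDelta0 q0.
    split.
      apply/negP => /eqP /rowP /(_ ord0); rewrite !mxE /=.
      by move=> /eqP; rewrite oner_eq0.
    by move=> [[|[|i]] hi] //= _; rewrite mxE.
  have hq0V m : (q0 *m V) 0 m = (omega theta m)^-1.
    rewrite piV /piS /Peval.
    rewrite !big_ord_recl big_ord0 !mxE /=.
    by rewrite expr0 mulr1 !mul0r !addr0 mul1r.
  have [c [hc hcq]] := hD q0 hq0.
  have hHc m : H m m = c.
    have := congr1 (fun M : 'rV_6 => M 0 m) hcq; rewrite /= [LHS]mxE [RHS]mxE.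
    rewrite (bigD1 m) //= big1 => [|b hbm]; last by rewrite diag ?mulr0.
    rewrite addr0 hq0V [RHS]mulrC; apply: mulfI.
    by rewrite invr_eq0 omega_neq0.
  exists c; split => // x.
  have : x *m G *m V = (c *: x) *m V.
    rewrite hGV -scalemxAl; apply/rowP => m; rewrite [LHS]mxE [RHS]mxE (bigD1 m) //= big1 => [|b hbm]; last by rewrite diag ?mulr0.
    by rewrite addr0 hHc mulrC.
  by move=> /(congr1 (fun M => M *m invmx V)); rewrite !mulmxK.
exists c0; split => //.
by rewrite scalemxAl -(hscal p) /G mulmxA mulmxKV.
Qed.
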